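(* Let $\mathcal G=(\mathcal V,\mathcal E)$ be a connected graph on $n$ vertices, $M\ge2$, $\mathcal X=\{0,\dots,M-1\}$ with a group operation $+$. For $k\ge1$ define \[ \mathcal A_k=\Big\{\boldsymbol w\in\mathcal X^n,\ \boldsymbol w\neq\mathbf 0:\ \big|\{(i,j)\in\mathcal E: i>j,\ w_i-w_j\neq 0\}\big|<k\cdot\mathsf{mincut}\Big\}. \] Then for any $k\le n^2/\mathsf{mincut}$, \[ \frac{\log|\mathcal A_k|}{k}<2\log M+2\log(2k\cdot\mathsf{mincut})+4\tau^{\mathrm{cut}}\le2\log M+4\log(2n)+4\tau^{\mathrm{cut}}. \]
   Context: $x_i-x_j:=x_i+(-x_j)$, and $\mathbf 0$ denotes the vector whose entries are all the identity element $0$. $e(\mathcal S,\mathcal S^{\mathrm c})$ is the number of edges between $\mathcal S$ and $\mathcal V\setminus\mathcal S$; $\mathsf{mincut}=\min_{\emptyset\ne\mathcal S\subsetneq\mathcal V}e(\mathcal S,\mathcal S^{\mathrm c})$; $\mathcal N(m)=\{\mathcal S\subseteq\mathcal V:e(\mathcal S,\mathcal S^{\mathrm c})\le m\}$; $\tau^{\mathrm{cut}}=\max_k\frac1k\log|\mathcal N(k\cdot\mathsf{mincut})|$ over positive integers $k$. *)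

(* Defs.v *)
From HB Require Import structures.
From mathcomp Require Import all_boot all_order all_algebra all_fingroup.
From mathcomp Require Import classical_sets reals exp.
Set Implicit Arguments. Unset Strict Implicit. Unset Printing Implicit Defensive.
Import Order.TTheory GRing.Theory Num.Theory.

(* A simple undirected graph on the vertex set V = 'I_n is a symmetric,
   irreflexive relation e : rel 'I_n.  An undirected edge {i,j} is
   represented once, by the ordered pair (i,j) with e i j and i > j. *)

Definition cut_size (n : nat) (e : rel 'I_n) (S : {set 'I_n}) : nat :=
  #|[set p : 'I_n * 'I_n |
      [&& e p.1 p.2, (p.2 < p.1)%N & (p.1 \in S) != (p.2 \in S)]]|.

(* mincut = min over nonempty proper subsets S of e(S,S^c).  The default
   value n^2 of the fold is never reached when n >= 2 (the index set is then
   nonempty and every cut is < n^2). *)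
Definition mincut (n : nat) (e : rel 'I_n) : nat :=
  \big[minn/(n ^ 2)%N]_(S : {set 'I_n} | (S != finset.set0) && (S != [set: 'I_n])) cut_size e S.

Definition cutN (n : nat) (e : rel 'I_n) (m : nat) : {set {set 'I_n}} :=
  [set S : {set 'I_n} | (cut_size e S <= m)%N].

(* tau^cut = max over positive integers k of (1/k) log |N(k * mincut)|
   (stated as the supremum; the maximum is attained). *)
Definition tau_cut (R : realType) (n : nat) (e : rel 'I_n) : R :=
  sup [set (ln (#|cutN e (k * mincut e)|)%:R / k%:R)%R
      | k in [set k : nat | (0 < k)%N]].

(* A_k = { w in X^n, w <> 0 : |{(i,j) in E : i > j, w_i - w_j <> 0}| < k*mincut }
   for a finite group X (written multiplicatively: identity 1, w_i - w_j is
   w_i * w_j^-1). *)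
Definition Aset (gT : finGroupType) (n : nat) (e : rel 'I_n) (k : nat)
  : {set {ffun 'I_n -> gT}} :=
  [set w : {ffun 'I_n -> gT} |
     (w != [ffun=> 1%g]) &&
     (#|[set p : 'I_n * 'I_n |
          [&& e p.1 p.2, (p.2 < p.1)%N & (w p.1 * (w p.2)^-1 != 1)%g]]|
        < k * mincut e)%N].

(* Main.v *)
Require Import Defs.
From HB Require Import structures.
From mathcomp Require Import all_boot all_order all_algebra all_fingroup.
From mathcomp Require Import classical_sets reals exp.
From mathcomp Require Import ring lra.
Import Order.TTheory GRing.Theory Num.Theory.
Set Implicit Arguments. Unset Strict Implicit. Unset Printing Implicit Defensive.

Section Comb.
Variables (gT : finGroupType) (n : nat) (e : rel 'I_n).

Definition lvl (w : {ffun 'I_n -> gT}) (g : gT) : {set 'I_n} := [set i | w i == g].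
Definition diffs (w : {ffun 'I_n -> gT}) : {set 'I_n * 'I_n} :=
  [set p : 'I_n * 'I_n |
          [&& e p.1 p.2, (p.2 < p.1)%N & (w p.1 * (w p.2)^-1 != 1)%g]].

Lemma cut_lvl_le w g : (cut_size e (lvl w g) <= #|diffs w|)%N.
Proof.
apply: subset_leq_card; apply/fintype.subsetP => p; rewrite /lvl !inE.
case/and3P => -> -> H; rewrite /= divg_eq1; apply: contra H => /eqP ->.
by rewrite eqxx.
Qed.

Lemma sum_cut_lvl w : (\sum_(g : gT) cut_size e (lvl w g) = 2 * #|diffs w|)%N.
Proof.
rewrite /cut_size.
have E : forall A : {set 'I_n * 'I_n}, #|A| = (\sum_p (p \in A))%N.
  by move=> A; rewrite -sum1_card big_mkcond.
under eq_bigr => g _ do rewrite E.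
rewrite exchange_big /= /diffs E big_distrr /=.
apply: eq_bigr => p _; rewrite /lvl !inE divg_eq1.
under eq_bigr => g _ do rewrite !inE.
case: (e p.1 p.2) => /=; last by rewrite big1.
case: (p.2 < p.1)%N => /=; last by rewrite big1.
case: (eqVneq (w p.1) (w p.2)) => [->|ne] /=.
  by rewrite big1 // => g _; rewrite eqxx.
rewrite (bigD1 (w p.1)) //= (bigD1 (w p.2)) //=; last by rewrite eq_sym.
rewrite !eqxx [w p.2 == w p.1]eq_sym (negbTE ne) big1 // => g /andP [h1 h2].
by rewrite ![w _ == g]eq_sym (negbTE h1) (negbTE h2).
Qed.

Lemma minn_big_le (I : finType) (P : pred I) (F : I -> nat) x j :
  P j -> (\big[minn/x]_(i | P i) F i <= F j)%N.
Proof.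
move=> Pj; have : j \in index_enum I by rewrite mem_index_enum.
elim: (index_enum I) => // a r IH; rewrite inE big_cons => /orP [/eqP<-|jr].
  by rewrite Pj geq_minl.
case: (P a); [exact: (leq_trans (geq_minr _ _) (IH jr)) | exact: IH jr].
Qed.

Lemma mincut_le (S : {set 'I_n}) : S != finset.set0 -> S != [set: 'I_n] -> (mincut e <= cut_size e S)%N.
Proof.
move=> h1 h2; rewrite /mincut; apply: minn_big_le; by rewrite h1 h2.
Qed.

Definition img (w : {ffun 'I_n -> gT}) : {set gT} := [set g | lvl w g != finset.set0].

Lemma img_notT w g : (1 < #|img w|)%N -> g \in img w -> lvl w g != [set: 'I_n].
Proof.
move=> h gi; apply/negP => /eqP T.
have : img w \subset [set g].
  apply/fintype.subsetP => g'; rewrite !inE => /set0Pn [i].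
  have : i \in lvl w g by rewrite T inE.
  by rewrite !inE => /eqP -> /eqP ->.
by move/subset_leq_card; rewrite cards1 leqNgt h.
Qed.

Lemma sum_in_le (A : {set gT}) (F : gT -> nat) : (\sum_(g in A) F g <= \sum_g F g)%N.
Proof.
rewrite [X in (_ <= X)%N](bigID (fun g => g \in A)) /=; exact: leq_addr.
Qed.

Lemma img_mincut w : (1 < #|img w|)%N -> (#|img w| * mincut e <= 2 * #|diffs w|)%N.
Proof.
move=> h; rewrite -sum_cut_lvl -sum_nat_const.
apply: (leq_trans _ (sum_in_le (img w) _)); apply: leq_sum => g gi.
apply: mincut_le; last exact: img_notT.
by move: gi; rewrite inE.
Qed.

Lemma nat_bounds w k : (0 < mincut e)%N -> (#|diffs w| < k * mincut e)%N ->
  (#|img w| <= 2 * k)%N /\ (\sum_(g in img w) (cut_size e (lvl w g) %/ mincut e).+1 <= 4 * k)%N.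
Proof.
move=> mc0 hd.
have h1 : (#|img w| <= 2 * k)%N.
  case: (ltnP 1 #|img w|) => h.
    have := img_mincut h => h2.
    have : (#|img w| * mincut e < 2 * k * mincut e)%N.
      apply: (leq_ltn_trans h2); rewrite -mulnA ltn_pmul2l //.
    by rewrite ltn_pmul2r // => /ltnW.
  apply: (leq_trans h); move: hd; case: k => //; by rewrite mul0n.
split => //.
have h2 : (\sum_(g in img w) (cut_size e (lvl w g) %/ mincut e) < 2 * k)%N.
  rewrite -(ltn_pmul2r mc0) big_distrl /=.
  apply: leq_ltn_trans; first by apply: leq_sum => g _; exact: leq_divM.
  apply: (leq_ltn_trans (sum_in_le _ _)); rewrite sum_cut_lvl -mulnA ltn_pmul2l //.
under eq_bigr => g _ do rewrite -addn1.
rewrite big_split /= sum_nat_const muln1.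
have -> : (4 * k = 2 * k + 2 * k)%N by rewrite -mulnDl.
by rewrite leq_add // ltnW.
Qed.

End Comb.

Local Open Scope ring_scope.
Local Notation expR := sequences.expR.

Section Tau.
Variables (R : realType) (n : nat) (e : rel 'I_n).

Lemma cut0 : cut_size e finset.set0 = 0%N.
Proof.
rewrite /cut_size; apply/eqP; rewrite cards_eq0; apply/eqP/setP => p.
by rewrite !inE /= !andbF.
Qed.

Lemma cutN_gt0 m : (0 < #|cutN e m|)%N.
Proof. apply/card_gt0P; exists finset.set0; by rewrite inE cut0. Qed.

Lemma tau_ub j : (0 < j)%N ->
  ln (#|cutN e (j * mincut e)|%:R) / j%:R <= tau_cut R e.
Proof.
move=> j0; apply: ub_le_sup; last by exists j.
exists (ln (#|{set 'I_n}|%:R : R)) => y [i /= i0 <-].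
have N0 : (0 : R) < #|cutN e (i * mincut e)|%:R by rewrite ltr0n cutN_gt0.
have l0 : 0 <= ln (#|cutN e (i * mincut e)|%:R : R).
  by apply: ln_ge0; rewrite ler1n cutN_gt0.
apply: (@le_trans _ _ (ln (#|cutN e (i * mincut e)|%:R : R))).
  rewrite ler_pdivrMr ?ltr0n // ler_peMr // ler1n //.
rewrite ler_ln ?posrE // ?ltr0n ?ler_nat ?max_card //.
by apply: leq_trans (cutN_gt0 (i * mincut e)) (max_card _).
Qed.

Lemma tau_ge0 : 0 <= tau_cut R e.
Proof.
apply: le_trans (tau_ub (ltn0Sn 0)); rewrite divr1.
by apply: ln_ge0; rewrite ler1n cutN_gt0.
Qed.

Lemma cutN_exp j : (0 < j)%N ->
  (#|cutN e (j * mincut e)|%:R : R) <= expR (j%:R * tau_cut R e).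
Proof.
move=> j0; have := tau_ub j0; rewrite ler_pdivrMr ?ltr0n // => h.
have N0 : (0 : R) < #|cutN e (j * mincut e)|%:R by rewrite ltr0n cutN_gt0.
rewrite -[X in X <= _](lnK N0) ler_expR mulrC //.
Qed.

End Tau.

Section Count.
Variables (R : realType) (gT : finGroupType) (n : nat) (e : rel 'I_n) (k : nat).
Hypothesis mc0 : (0 < mincut e)%N.

Definition MM : R := #|gT|%:R.
Definition xx : R := expR (- tau_cut R e).
Definition lev (S : {set 'I_n}) := (cut_size e S %/ mincut e).+1.
Definition W (S : {set 'I_n}) : R :=
  if S == finset.set0 then 1
  else if (cut_size e S < k * mincut e)%N then MM^-1 * xx ^+ lev S else 0.

Lemma MM_gt0 : 0 < MM.
Proof. rewrite /MM ltr0n; apply/card_gt0P; by exists 1%g. Qed.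

Lemma xx_ge0 : 0 <= xx. Proof. exact: expR_ge0. Qed.
Lemma xx_le1 : xx <= 1.
Proof. rewrite /xx -expR0 ler_expR oppr_le0; exact: tau_ge0. Qed.

Lemma W_ge0 S : 0 <= W S.
Proof.
rewrite /W; case: ifP => _ //; case: ifP => _ //.
by rewrite mulr_ge0 ?exprn_ge0 ?xx_ge0 // invr_ge0 ltW // MM_gt0.
Qed.

Lemma prodW w : w \in Aset gT e k ->
  (MM^-1)^+(2*k) * xx^+(4*k) <= \prod_g W (lvl w g).
Proof.
rewrite inE => /andP [_ hd].
have [h1 h2] := nat_bounds mc0 hd.
rewrite (bigID (fun g => g \in img w)) /=.
rewrite [X in _ <= _ * X]big1 ?mulr1; last first.
  move=> g; rewrite inE negbK => /eqP ->; by rewrite /W eqxx.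
rewrite (eq_bigr (fun g => MM^-1 * xx ^+ lev (lvl w g))); last first.
  move=> g; rewrite inE => h; rewrite /W (negbTE h).
  by rewrite (leq_ltn_trans (cut_lvl_le e w g) hd).
rewrite big_split /= prodr_const prodrXr.
have Mi0 : 0 <= MM^-1 by rewrite invr_ge0 ltW // MM_gt0.
have Mi1 : MM^-1 <= 1.
  rewrite invf_le1 ?MM_gt0 // /MM ler1n; apply/card_gt0P; by exists 1%g.
apply: ler_pM; rewrite ?exprn_ge0 ?xx_ge0 //.
  exact: ler_wiXn2l.
exact: ler_wiXn2l xx_ge0 xx_le1 _ _ h2.
Qed.


Lemma sumW : \sum_S W S <= 1 + k%:R / MM.
Proof.
have Mi0 : 0 <= MM^-1 by rewrite invr_ge0 ltW // MM_gt0.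
rewrite (bigD1 finset.set0) //= {1}/W eqxx lerD2l.
pose U (S : {set 'I_n}) := if (cut_size e S < k * mincut e)%N then xx ^+ lev S else 0.
have U0 S : 0 <= U S by rewrite /U; case: ifP => // _; rewrite exprn_ge0 // xx_ge0.
rewrite (eq_bigr (fun S => MM^-1 * U S)); last first.
  by move=> S h; rewrite /W /U (negbTE h); case: ifP => // _; rewrite mulr0.
rewrite -mulr_sumr mulrC ler_wpM2r //.
apply: (@le_trans _ _ (\sum_S U S)).
  rewrite [X in _ <= X](bigID (fun S => S != finset.set0)) /= lerDl.
  by apply: sumr_ge0 => S _.
pose c (j : 'I_k) : R := xx ^+ j.+1.
apply: (@le_trans _ _ (\sum_S \sum_(j < k) (if S \in cutN e (j.+1 * mincut e) then c j else 0))).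
  apply: ler_sum => S _; rewrite /U; case: ifP => h; last first.
    by apply: sumr_ge0 => j _; case: ifP => // _; rewrite exprn_ge0 // xx_ge0.
  have jk : ((lev S).-1 < k)%N by rewrite /lev /= ltn_divLR.
  rewrite (bigD1 (Ordinal jk)) //= inE.
  have -> : (cut_size e S <= lev S * mincut e)%N by rewrite ltnW // ltn_ceil.
  rewrite /c /= lerDl; apply: sumr_ge0 => j _.
  by case: ifP => // _; rewrite exprn_ge0 // xx_ge0.
rewrite exchange_big /=.
apply: (@le_trans _ _ (\sum_(j < k) (1 : R))); last by rewrite sumr_const card_ord.
apply: ler_sum => j _; rewrite -big_mkcond /= sumr_const -mulr_natl.
apply: (@le_trans _ _ (expR (j.+1%:R * tau_cut R e) * c j)).
  by rewrite ler_wpM2r ?exprn_ge0 ?xx_ge0 // cutN_exp.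
by rewrite /c /xx -expRM_natl -expRD mulrN subrr expR0.
Qed.

Definition enc (w : {ffun 'I_n -> gT}) : {ffun gT -> {set 'I_n}} := [ffun g => lvl w g].

Lemma enc_inj : injective enc.
Proof.
move=> w1 w2 /ffunP h; apply/ffunP => i; have := h (w1 i).
rewrite !ffunE => /setP /(_ i); rewrite !inE eqxx => /esym /eqP //.
Qed.

Lemma sum_prodW : \sum_(w in Aset gT e k) \prod_g W (lvl w g) <= (\sum_S W S) ^+ #|gT|.
Proof.
rewrite (eq_bigr (fun w => \prod_g W (enc w g))); last first.
  by move=> w _; apply: eq_bigr => g _; rewrite ffunE.
rewrite -(big_imset (fun f : {ffun gT -> {set 'I_n}} => \prod_g W (f g)) (in2W enc_inj)) /=.
apply: (@le_trans _ _ (\sum_(f : {ffun gT -> {set 'I_n}}) \prod_g W (f g))).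
  rewrite [X in _ <= X](bigID (fun f => f \in enc @: Aset gT e k)) /= lerDl.
  apply: sumr_ge0 => f _; apply: prodr_ge0 => g _; exact: W_ge0.
rewrite -(bigA_distr_bigA (fun (_ : gT) S => W S)) /=.
by rewrite prodr_const.
Qed.

End Count.

Unset Implicit Arguments.

Theorem lemma3 (R : realType) (gT : finGroupType) (n : nat) (e : rel 'I_n)
  (e_sym : symmetric e) (e_irr : irreflexive e)
  (e_conn : forall x y : 'I_n, connect e x y)
  (n_ge2 : (2 <= n)%N) (M_ge2 : (2 <= #|gT|)%N)
  (k : nat) (k_gt0 : (0 < k)%N)
  (k_le : (k%:R : R) <= (n ^ 2)%:R / (mincut e)%:R) :
  ln (#|Aset gT e k|%:R : R) / k%:R
    < 2 * ln (#|gT|%:R) + 2 * ln ((2 * k * mincut e)%:R) + 4 * tau_cut R e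
  /\
  2 * ln (#|gT|%:R) + 2 * ln ((2 * k * mincut e)%:R) + 4 * tau_cut R e
    <= 2 * ln (#|gT|%:R) + 4 * ln ((2 * n)%:R) + 4 * tau_cut R e.
Proof.
have mc0 : (0 < mincut e)%N.
  rewrite lt0n; apply/negP => /eqP h; move: k_le.
  rewrite h invr0 mulr0 lern0 => /eqP hk; by rewrite hk in k_gt0.
have kmc : (k * mincut e <= n ^ 2)%N.
  by move: k_le; rewrite ler_pdivlMr ?ltr0n // -natrM ler_nat.
have t0 := tau_ge0 R e.
have k0 : (0 : R) < k%:R by rewrite ltr0n.
have M1 : (1 : R) < MM R gT by rewrite /MM ltr1n.
have lnM : 0 < ln (MM R gT) by apply: ln_gt0.
have ln2 : 1 / 2 < ln (2 : R).
  have hx : (- (1/2) : R) != 0 by rewrite oppr_eq0 div1r invr_eq0 pnatr_eq0.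
  have h := expR_gt1Dx hx.
  have h' : expR (1/2 : R) < 2.
    move: h; rewrite expRN.
    have -> : (1 : R) + - (1 / 2) = 2^-1 by field.
    by rewrite ltf_pV2 ?posrE ?expR_gt0.
  by rewrite -[X in X < _](expRK (1/2)) ltr_ln ?posrE ?expR_gt0.
have l2k : ln (2 : R) <= ln ((2 * k * mincut e)%:R).
  rewrite ler_ln ?posrE ?ltr0n ?muln_gt0 ?k_gt0 ?mc0 // ler_nat -mulnA.
  by rewrite leq_pmulr // muln_gt0 k_gt0 mc0.
have main : ln (#|Aset gT e k|%:R : R) <= k%:R * (1 + 2 * ln (MM R gT) + 4 * tau_cut R e).
  case: (posnP #|Aset gT e k|) => hA.
    rewrite hA ln0 //; apply: mulr_ge0; [exact: ltW | lra].
  set B := 2 * k%:R * ln (MM R gT) + 4 * k%:R * tau_cut R e.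
  have key : #|Aset gT e k|%:R * ((MM R gT)^-1 ^+ (2*k) * xx R e ^+ (4*k)) <= expR k%:R.
    rewrite mulr_natl -sumr_const.
    apply: (@le_trans _ _ (\sum_(w in Aset gT e k) \prod_g W R gT e k (lvl w g))).
      by apply: ler_sum => w hw; exact: prodW.
    apply: le_trans (sum_prodW _ _ _ _) _.
    have hM0 := MM_gt0 R gT.
    apply: (@le_trans _ _ ((1 + k%:R / MM R gT) ^+ #|gT|)).
      apply: lerXn2r; rewrite ?nnegrE; first by apply: sumr_ge0 => S _; exact: W_ge0.
        by rewrite addr_ge0 // divr_ge0 // ltW.
      exact: sumW.
    apply: (@le_trans _ _ (expR (k%:R / MM R gT) ^+ #|gT|)).
      apply: lerXn2r; last exact: expR_ge1Dx.
        by rewrite nnegrE addr_ge0 // divr_ge0 // ltW.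
      by rewrite nnegrE expR_ge0.
    rewrite -expRM_natl mulrC /MM divfK // pnatr_eq0 -lt0n; apply/card_gt0P; by exists 1%g.
  have hMi : (MM R gT)^-1 = expR (- ln (MM R gT)).
    by rewrite expRN lnK // posrE (lt_trans ltr01).
  have hc : (MM R gT)^-1 ^+ (2*k) * xx R e ^+ (4*k) = expR (- B).
    rewrite hMi /xx -!expRM_natl -expRD /B !natrM; congr expR; ring.
  rewrite hc in key.
  have key2 : (#|Aset gT e k|%:R : R) <= expR k%:R * expR B.
    by move: key; rewrite expRN ler_pdivrMr // expR_gt0.
  rewrite -ler_expR lnK ?posrE ?ltr0n //.
  apply: (le_trans key2); rewrite -expRD /B le_eqVlt; apply/orP; left; apply/eqP; congr expR; ring.
have main' : ln (#|Aset gT e k|%:R : R) / k%:R <= 1 + 2 * ln (MM R gT) + 4 * tau_cut R e.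
  by rewrite ler_pdivrMr // mulrC.
split.
  apply: (le_lt_trans main'); rewrite /MM; lra.
have : ln ((2 * k * mincut e)%:R : R) <= 2 * ln ((2 * n)%:R).
  rewrite -[X in _ <= X * _]/(2%:R) mulr_natl -lnXn ?ltr0n ?muln_gt0 //; last by apply: leq_trans n_ge2.
  rewrite ler_ln ?posrE ?exprn_gt0 ?ltr0n ?muln_gt0 ?k_gt0 ?mc0 //; last by apply: leq_trans n_ge2.
  rewrite -natrX ler_nat -mulnA expnMn.
  exact: leq_mul.
lra.
Qed.
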